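(* Let $p\ge3$ be a prime, let $c>0$, let $M=\lceil 2p^2\log p/(c\pi^2)\rceil$, and let $D$ be a probability distribution on $\mathbb{F}_p$ such that $D(x)\le1-c$ for each $x\in\mathbb{F}_p$. If $A\subset\mathbb{F}_p^n$ has density $\epsilon$ with respect to $D^n$, then the sumset $(p-1)MA$ has density at least $\epsilon^{(p-1)M}$ inside $\mathbb{F}_p^n$ with respect to the uniform distribution on $\mathbb{F}_p^n$.
   Context: $D^n$ is the distribution on $\mathbb{F}_p^n$ whose coordinates are independent with distribution $D$; the density of $A$ with respect to a distribution $\mu$ is $\sum_{x\in A}\mu(x)$. For a positive integer $K$, $KA=\{a_1+\dots+a_K:a_i\in A\}$ is the $K$-fold sumset. *)

(* Defs.v *)
From HB Require Import structures.
From mathcomp Require Import all_boot all_order all_algebra.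
From mathcomp Require Import all_classical all_reals all_analysis.
Set Implicit Arguments. Unset Strict Implicit. Unset Printing Implicit Defensive.
Import Order.TTheory GRing.Theory Num.Theory.
Local Open Scope ring_scope.

Definition sumset (p n K : nat) (A : {set 'rV['F_p]_n}) : {set 'rV['F_p]_n} :=
  [set x | [exists f : {ffun 'I_K -> 'rV['F_p]_n},
             [forall i, f i \in A] && (\sum_(i < K) f i == x)]].

Definition prod_dist (R : realType) (p n : nat) (D : 'F_p -> R) (x : 'rV['F_p]_n) : R :=
  \prod_(i < n) D (x ord0 i).

Definition density (R : realType) (p n : nat) (D : 'F_p -> R) (A : {set 'rV['F_p]_n}) : R :=
  \sum_(x in A) prod_dist D x.

Definition unif_density (R : realType) (p n : nat) (S : {set 'rV['F_p]_n}) : R :=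
  #|S|%:R / (p ^ n)%:R.

(* Main.v *)
Require Import Defs.
From HB Require Import structures.
From mathcomp Require Import all_boot all_order all_algebra.
From mathcomp Require Import all_classical all_reals all_analysis.
From mathcomp Require Import ring lra zify.
Import Order.TTheory GRing.Theory Num.Theory.
Import numFieldNormedType.Exports.
Local Open Scope ring_scope.
Lemma cos_aux (R : realType) (x : R) k : 0 < x -> x * x < k.+1%:R * k.+2%:R ->
  0 < x ^+ k / k`!%:R - x ^+ k.+2 / k.+2`!%:R.
Proof.
move=> x0 hk.
rewrite (factS k.+1) (factS k) !natrM !exprS.
have kp : (0 : R) < k`!%:R by rewrite ltr0n fact_gt0.
have xk : 0 < x ^+ k by rewrite exprn_gt0.
set y := x ^+ k in xk *. set f := k`!%:R in kp *.
set a := k.+1%:R in hk *. set b := k.+2%:R in hk *.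
have a0 : 0 < a by rewrite /a ltr0n.
have b0 : 0 < b by rewrite /b ltr0n.
have -> : y / f - x * (x * y) / (b * (a * f)) = (y / f) * (1 - x * x / (a * b)).
  field. by rewrite !gt_eqF.
apply: mulr_gt0; first by apply: divr_gt0.
by rewrite subr_gt0 ltr_pdivrMr ?mulr_gt0 // mul1r mulrC.
Qed.

Lemma cos85_lt0 (R : realType) : cos (8/5 : R) < 0.
Proof.
set x : R := 8/5.
rewrite -(opprK (cos _)) oppr_lt0; have /cvgN h := @cvg_cos_coeff' R x.
rewrite -(cvg_lim (@Rhausdorff R) h).
apply: (@lt_trans _ _ (\sum_(0 <= i < 3) - cos_coeff' x i)).
  do 3 rewrite big_nat_recl//; rewrite big_nil addr0 /cos_coeff' /=.
  rewrite -!exprnP /= !factS fact0 /x.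
  rewrite !expr0 !expr1 !exprS expr0. 
  lra.
rewrite -seriesN lt_sum_lim_series //.
  by move/cvgP in h; by rewrite seriesN.
move=> d.
rewrite /cos_coeff' -!exprnP addnS.
have -> : (3 + d.*2).+1.*2 = (3 + d.*2).*2.+2 by rewrite doubleS.
have s : (-1 : R) ^+ (3 + d.*2) = -1 by rewrite -signr_odd oddD odd_double /= expr1.
rewrite exprS s !mulN1r ?mul1r ?opprK.
rewrite mulNr opprK mul1r.
apply: cos_aux; first by rewrite /x; lra.
apply: (@lt_le_trans _ _ 56); first by rewrite /x; lra.
rewrite -natrM ler_nat. nia.
Qed.
Lemma pi_le165 (R : realType) : pi <= (16/5 : R).
Proof.
have h := cos85_lt0 R.
rewrite leNgt; apply/negP => hp.
have : 0 < cos (8/5 : R).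
  apply: cos_gt0_pihalf; apply/andP; split; first by have := pi_gt0 R; lra.
  lra.
lra.
Qed.

Lemma ln3_ge1 (R : realType) : 1 <= ln (3 : R).
Proof.
have e1 : (9/10 : R) <= expR (-1/10).
  apply: le_trans (expR_ge1Dx _); lra.
have e2 : expR (-1 : R) = expR (-1/10) ^+ 10.
  by rewrite -expRM_natr; congr expR; lra.
have e3 : (1/3 : R) <= expR (-1).
  rewrite e2; apply: le_trans (lerXn2r _ _ _ e1); rewrite ?nnegrE; try lra.
have e4 : expR (1 : R) <= 3.
  have : expR (1:R) * expR (-1) = 1 by rewrite expRxMexpNx_1.
  have := expR_gt0 (1 : R). nra.
rewrite -[X in X <= _](expRK 1).
by rewrite ler_ln // posrE ?expR_gt0 //.
Qed.

Lemma lam_bound (R : realType) (p M : nat) (c : R) : (3 <= p)%N -> 0 < c ->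
  M%:Z = Num.ceil (2 * (p%:R) ^+ 2 * ln (p%:R) / (c * pi ^+ 2)) ->
  25 * (p%:R : R) ^+ 2 / 128 <= c * M%:R.
Proof.
move=> p3 c0 hM.
have hM' : 2 * (p%:R : R) ^+ 2 * ln (p%:R) / (c * pi ^+ 2) <= M%:R.
  by apply: le_trans (ceil_ge _) _; rewrite -hM.
have lp : 1 <= ln (p%:R : R).
  apply: le_trans (ln3_ge1 R) _.
  have p0 : (0 < p)%N by lia.
  by rewrite ler_ln ?posrE ?ltr0n // ler_nat.
have pi0 := pi_gt0 R. have pi1 := pi_le165 R.
have pi2 : pi ^+ 2 <= (256/25 : R) by rewrite expr2; nra.
have pi20 : 0 < pi ^+ 2 :> R by rewrite exprn_gt0.
set P := (p%:R : R) ^+ 2 in hM' *.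
set L := ln _ in lp hM' *. set Q := pi ^+ 2 in pi2 pi20 hM' *.
have P0 : 0 <= P by rewrite /P exprn_ge0.
have h1 : 2 * P * L / Q <= c * M%:R.
  rewrite -(ler_pM2l c0) in hM'. apply: le_trans hM'.
  rewrite le_eqVlt; apply/orP; left; apply/eqP. field.
  by apply/andP; split; rewrite gt_eqF.
apply: le_trans h1.
rewrite ler_pdivlMr ?ltr0n //.
nra.
Qed.
Definition phi {R : realType} (c x : R) := 1 - c + c * x.

Lemma phi_ge0 (R : realType) (c x : R) : 0 <= c -> c <= 1 -> 0 <= x -> 0 <= phi c x.
Proof. rewrite /phi => *; nra. Qed.

Lemma phi_le (R : realType) (c x y : R) : 0 <= c -> x <= y -> phi c x <= phi c y.
Proof. rewrite /phi => *; nra. Qed.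

Lemma comb_step (R : realType) (c th tau : R) (p M K : nat) (r : 'I_K -> R) (S : {set 'I_K}) :
  K = ((p - 1) * M)%N -> (0 < M)%N -> 0 <= c -> c <= 1 -> 0 <= th ->
  (forall x, th <= x -> x <= 1 -> phi c x ^+ M <= x) ->
  (forall i, 0 <= r i <= 1) ->
  th <= tau -> tau <= 1 ->
  (forall k, k \notin S -> r k <= tau) -> (forall i, i \in S -> tau <= r i) ->
  (#|S| <= p - 1)%N ->
  p%:R * tau ^+ (p - 1 - #|S|) <= (#|S|.+1)%:R ->
  p%:R * \prod_(i < K) phi c (r i) <= (#|S|.+1)%:R * \prod_(i in S) r i.
Proof.
move=> hK M0 c0 c1 th0 HR1 r01 thtau tau1 hout hin hS hp.
have r0 i : 0 <= r i by case/andP: (r01 i).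
have r1 i : r i <= 1 by case/andP: (r01 i).
have tau0 : 0 <= tau by apply: le_trans thtau.
have ph0 x : 0 <= x -> 0 <= phi c x by move=> x0; apply: phi_ge0.
set s := #|S| in hS hp *.
rewrite (bigID (mem S)) /=.
have e1 : \prod_(i < K | i \notin S) phi c (r i) <= phi c tau ^+ (s * (M - 1) + (p - 1 - s) * M).
  have -> : (s * (M - 1) + (p - 1 - s) * M = #|~: S|)%N.
    have := cardsC S; rewrite card_ord -/s; nia.
  rewrite -prodr_const (eq_bigl (fun i => i \notin S)); last by move=> i; rewrite inE.
  apply: ler_prod => i hi.
  by rewrite ph0 ?r0 //= phi_le // hout.
have e2 : phi c tau ^+ (s * (M - 1)) <= \prod_(i in S) phi c (r i) ^+ (M - 1).
  rewrite mulnC exprM /s -prodr_const; apply: ler_prod => i hi.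
  rewrite exprn_ge0 ?ph0 //= lerXn2r ?nnegrE ?ph0 ?r0 //.
  by rewrite phi_le // hin.
have e3 : phi c tau ^+ ((p - 1 - s) * M) <= tau ^+ (p - 1 - s).
  rewrite mulnC exprM lerXn2r ?nnegrE ?exprn_ge0 ?ph0 //.
  by apply: HR1.
have e4 : \prod_(i in S) phi c (r i) * \prod_(i in S) phi c (r i) ^+ (M - 1) <= \prod_(i in S) r i.
  rewrite -big_split /=; apply: ler_prod => i hi.
  rewrite mulr_ge0 ?exprn_ge0 ?ph0 //=.
  rewrite -exprS subn1 prednK //; apply: HR1; last exact: r1.
  by apply: le_trans thtau (hin _ hi).
have P0 : 0 <= \prod_(i in S) r i by apply: prodr_ge0 => i _; apply: r0.
have Q0 : 0 <= \prod_(i in S) phi c (r i) by apply: prodr_ge0 => i _; apply: ph0.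
have Q1 : 0 <= \prod_(i in S) phi c (r i) ^+ (M - 1).
  by apply: prodr_ge0 => i _; apply: exprn_ge0; apply: ph0.
have T0 : 0 <= phi c tau ^+ (s * (M - 1)) by rewrite exprn_ge0 ?ph0.
have T1 : 0 <= phi c tau ^+ ((p - 1 - s) * M) by rewrite exprn_ge0 ?ph0.
have N0 : 0 <= \prod_(i < K | i \notin S) phi c (r i).
  by apply: prodr_ge0 => i _; apply: ph0.
rewrite exprD in e1.
have f1 : \prod_(i in S) phi c (r i) * \prod_(i < K | i \notin S) phi c (r i)
   <= \prod_(i in S) r i * tau ^+ (p - 1 - s).
  apply: le_trans (ler_wpM2l Q0 e1) _.
  rewrite mulrA; apply: ler_pM => //.
    by rewrite mulr_ge0.
  apply: le_trans e4; apply: ler_wpM2l => //.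
have f2 : 0 <= tau ^+ (p - 1 - s) by rewrite exprn_ge0.
apply: le_trans (ler_wpM2l (ler0n _ p) f1) _.
rewrite mulrCA [X in _ <= X]mulrC.
by apply: ler_wpM2l.
Qed.

Lemma comb_exists (R : realType) (th : R) (p M K : nat) (r : 'I_K -> R) :
  K = ((p - 1) * M)%N -> (0 < M)%N -> (2 < p)%N -> 0 <= th -> th <= 1 ->
  (forall m, (m <= p - 1)%N -> p%:R * th ^+ m <= (p - m)%:R) ->
  (forall i, 0 <= r i <= 1) ->
  exists S : {set 'I_K}, exists tau : R,
    [/\ th <= tau, tau <= 1, (forall k, k \notin S -> r k <= tau),
        (forall i, i \in S -> tau <= r i) &
        ((#|S| <= p - 1)%N /\ p%:R * tau ^+ (p - 1 - #|S|) <= (#|S|.+1)%:R)].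
Proof.
move=> hK M0 p3 th0 th1 HR2 r01.
have r1 i : r i <= 1 by case/andP: (r01 i).
set G := [set i | th <= r i].
case: (ltnP #|G| (p - 1)) => hG.
  exists G, th; split => //.
  - by move=> k; rewrite inE -ltNge => /ltW.
  - by move=> i; rewrite inE.
  split; first exact: ltnW.
  apply: le_trans (HR2 _ (leq_subr _ _)) _.
  rewrite ler_nat; lia.
have hle : (p - 1 <= K)%N by rewrite hK; apply: leq_pmulr.
set J0 := [set widen_ord hle i | i : 'I_(p - 1)].
have hJ0 : #|J0| == (p - 1)%N.
  rewrite card_imset ?card_ord //.
  by move=> a b /(congr1 val) /= h; apply: val_inj.
case: (@arg_maxP _ R _ J0 (fun J : {set 'I_K} => #|J| == (p - 1)%N)
          (fun J => \sum_(i in J) r i) hJ0) => J /eqP hJ Jmax.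
have swap i k : i \in J -> k \notin J -> r k <= r i.
  move=> iJ kJ.
  have kJ' : k \notin J :\ i by rewrite !inE negb_and kJ orbT.
  have hc : #|k |: (J :\ i)| == (p - 1)%N.
    rewrite cardsU1 kJ' /=; have := cardsD1 i J; rewrite iJ hJ /=.
    move=> h; apply/eqP; lia.
  have := Jmax _ hc.
  by rewrite /= big_setU1 //= (big_setD1 i iJ) /= lerD2r.
have JG i : i \in J -> th <= r i.
  move=> iJ; rewrite leNgt; apply/negP => ri.
  have : ~~ (G \subset J :\ i).
    apply/negP => /subset_leq_card.
    have := cardsD1 i J; rewrite iJ hJ; lia.
  case/subsetPn => k kG; rewrite !inE negb_and negbK => /orP [/eqP ki | kJ].
    by move: kG; rewrite ki inE leNgt ri.
  have := swap _ _ iJ kJ; move: kG; rewrite inE => kG.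
  by move=> h; have := le_lt_trans (le_trans kG h) ri; rewrite ltxx.
have : (0 < #|J|)%N by rewrite hJ; lia.
case/card_gt0P => j0 j0J.
case: (@arg_minP _ R _ j0 (mem J) r j0J) => i0 i0J i0min.
exists J, (r i0); split.
- exact: JG.
- exact: r1.
- by move=> k kJ; apply: swap.
- by move=> i iJ; apply: i0min.
split; first by rewrite hJ.
rewrite hJ subnn expr0 mulr1 ler_nat; lia.
Qed.
Lemma Fp_natr {p : nat} (y : 'F_p) : prime p -> y = (val y)%:R.
Proof.
move=> pr; apply: val_inj; rewrite /= val_Fp_nat // modn_small //.
have := card_Fp pr; rewrite card_ord => e.
have := ltn_ord y; move: (val y) => v; by rewrite e.
Qed.

Lemma grow_step {p : nat} (Z : {set 'F_p}) (d : 'F_p) : prime p ->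
  (#|Z| < p)%N -> (0 < #|Z|)%N -> d != 0 ->
  (#|Z| < #|Z :|: [set (z + d)%R | z in Z]|)%N.
Proof.
move=> pr hZ hZ0 d0.
case: (boolP ([set (z + d)%R | z in Z] \subset Z)) => hs; last first.
  apply: proper_card; rewrite properEcard finset.subsetUl /=.
  case/fintype.subsetPn: hs => w wi wZ.
  apply: (@leq_trans #|w |: Z|); first by rewrite cardsU1 wZ.
  apply: subset_leq_card; apply/fintype.subsetP => v; rewrite !inE => /orP [/eqP -> | ->].
    by rewrite wi orbT.
  done.
exfalso.
case/card_gt0P: hZ0 => z zZ.
have cl n : z + d *+ n \in Z.
  elim: n => [|n IH]; first by rewrite mulr0n addr0.
  rewrite mulrS addrCA addrC; apply: (fintype.subsetP hs); apply/imsetP; exists (z + d *+ n) => //.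
have : Z = [set: 'F_p].
  apply/setP => w; rewrite inE.
  have e : w = z + d *+ (val ((w - z) / d)).
    by rewrite -mulr_natr -Fp_natr // mulrC divfK // addrC subrK.
  by rewrite e cl.
move=> eZ; move: hZ; rewrite eZ cardsT card_Fp //; lia.
Qed.

Definition ssums {p K : nat} (d : 'I_K -> 'F_p) (S : {set 'I_K}) : {set 'F_p} :=
  [set \sum_(i in I) d i | I : {set 'I_K} in powerset S].

Lemma ssums_card (p K : nat) (d : 'I_K -> 'F_p) : prime p ->
  forall S : {set 'I_K}, (#|S| <= p - 1)%N -> (forall i, i \in S -> d i != 0) ->
  (#|S|.+1 <= #|ssums d S|)%N.
Proof.
move=> pr S.
move e : #|S| => n; elim: n S e => [|n IH] S e hS hd.
  apply/card_gt0P; exists 0; apply/imsetP; exists finset.set0; first by rewrite powersetE finset.sub0set.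
  by rewrite big_set0.
have : (0 < #|S|)%N by rewrite e.
case/card_gt0P => x xS.
set S' := S :\ x.
have eS' : #|S'| = n by have := cardsD1 x S; rewrite xS e /= => [[]].
have hS' : (n <= p - 1)%N by lia.
have hd' : forall i, i \in S' -> d i != 0 by move=> i; rewrite inE => /andP [_ /hd].
have IH' := IH S' eS' hS' hd'.
have sub : ssums d S' :|: [set (z + d x)%R | z in ssums d S'] \subset ssums d S.
  apply/fintype.subsetP => v; rewrite inE => /orP [] /imsetP [I].
    move=> II ->; apply/imsetP; exists I => //.
    move: II; rewrite !powersetE => /fintype.subset_trans; apply; exact: finset.subsetDl.
  move=> /imsetP [J JS' ->] ->; apply/imsetP; exists (x |: J).
    rewrite powersetE; apply/fintype.subsetP => w; rewrite !inE => /orP [/eqP -> // | wJ].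
    by move: JS'; rewrite powersetE => /fintype.subsetP /(_ _ wJ); rewrite inE => /andP [].
  rewrite big_setU1 /=; first by rewrite addrC.
  apply/negP => xJ; move: JS'; rewrite powersetE => /fintype.subsetP /(_ _ xJ).
  by rewrite !inE eqxx.
apply: leq_trans (subset_leq_card sub).
case: (ltnP #|ssums d S'| p) => hlt.
  have h0 : (0 < #|ssums d S'|)%N by apply: leq_ltn_trans IH'.
  exact: (leq_ltn_trans IH' (@grow_step _ _ _ pr hlt h0 (hd _ xS))).
have := subset_leq_card (finset.subsetUl (ssums d S') [set (z + d x)%R | z in ssums d S']).
lia.
Qed.

Lemma comb (R : realType) (c th : R) (p M K : nat) (r : 'I_K -> R) :
  K = ((p - 1) * M)%N -> (0 < M)%N -> (2 < p)%N -> 0 <= c -> c <= 1 ->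
  0 <= th -> th <= 1 ->
  (forall x, th <= x -> x <= 1 -> phi c x ^+ M <= x) ->
  (forall m, (m <= p - 1)%N -> p%:R * th ^+ m <= (p - m)%:R) ->
  (forall i, 0 <= r i <= 1) ->
  exists S : {set 'I_K}, (#|S| <= p - 1)%N /\
    p%:R * \prod_(i < K) phi c (r i) <= (#|S|.+1)%:R * \prod_(i in S) r i.
Proof.
move=> hK M0 p3 c0 c1 th0 th1 HR1 HR2 r01.
have [S [tau [h1 h2 h3 h4 [h5 h6]]]] := comb_exists _ _ _ _ _ _ hK M0 p3 th0 th1 HR2 r01.
exists S; split => //.
exact: (comb_step _ _ _ _ _ _ _ _ _ hK M0 c0 c1 th0 HR1 r01 h1 h2 h3 h4 h5 h6).
Qed.

Lemma prod_sub (R : realType) (K : nat) (r : 'I_K -> R) (I S : {set 'I_K}) :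
  (forall i, 0 <= r i <= 1) -> I \subset S ->
  \prod_(i in S) r i <= \prod_(i in I) r i.
Proof.
move=> r01 IS; rewrite [X in X <= _]big_mkcond [X in _ <= X]big_mkcond /=.
apply: ler_prod => i _.
case: (boolP (i \in I)) => iI.
  by rewrite (fintype.subsetP IS _ iI) lexx andbT; case/andP: (r01 i).
by case: (i \in S) => /=; [exact: r01 | rewrite ler01 lexx].
Qed.


Lemma oneD (R : realType) (c th : R) (p M K : nat) (D : 'F_p -> R)
  (g : 'I_K -> 'F_p -> R) (h : 'F_p -> R) :
  prime p -> (2 < p)%N -> K = ((p - 1) * M)%N -> (0 < M)%N -> 0 <= c -> c <= 1 ->
  0 <= th -> th <= 1 ->
  (forall x, th <= x -> x <= 1 -> phi c x ^+ M <= x) ->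
  (forall m, (m <= p - 1)%N -> p%:R * th ^+ m <= (p - m)%:R) ->
  (forall x, 0 <= D x) -> \sum_x D x = 1 -> (forall x, D x <= 1 - c) ->
  (forall i y, 0 <= g i y) -> (forall y, 0 <= h y) ->
  (forall y : {ffun 'I_K -> 'F_p}, \prod_(i < K) g i (y i) <= h (\sum_(i < K) y i)) ->
  p%:R * \prod_(i < K) (\sum_x D x * g i x) <= \sum_z h z.
Proof.
move=> pr p3 hK M0 c0 c1 th0 th1 HR1 HR2 D0 D1 Dc g0 h0 hg.
have hsum0 : 0 <= \sum_z h z by apply: sumr_ge0.
pose a i := [arg max_(x > (0 : 'F_p)) g i x]%O.
have ha i y : g i y <= g i (a i).
  by rewrite /a; case: (@arg_maxP _ R _ 0 xpredT (g i) isT) => a' _ ha; apply: ha.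
case: (boolP [exists i, g i (a i) == 0]) => hz.
  case/existsP: hz => i /eqP hi.
  rewrite (bigD1 i) //=.
  have -> : \sum_x D x * g i x = 0.
    apply: big1 => x _.
    have -> : g i x = 0 by apply/eqP; rewrite eq_le g0 andbT -hi ha.
    by rewrite mulr0.
  by rewrite mul0r mulr0.
have mpos i : 0 < g i (a i).
  rewrite lt_neqAle g0 andbT.
  apply/negP => /eqP e; move/negP: hz; apply; apply/existsP; exists i; rewrite -e.
  done.
have an i : a i + 1 != a i.
  by rewrite -[X in _ != X]addr0 (inj_eq (@addrI _ (a i))) oner_eq0.
pose b i := [arg max_(x > a i + 1 | x != a i) g i x]%O.
have hb i : (b i != a i) /\ (forall y, y != a i -> g i y <= g i (b i)).
  rewrite /b; case: (@arg_maxP _ R _ (a i + 1) (fun x => x != a i) (g i) (an i)).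
  by move=> b' hb' hmax; split.
pose m i := g i (a i); pose s i := g i (b i); pose r i := s i / m i.
have r01 i : 0 <= r i <= 1.
  rewrite divr_ge0 ?g0 ?(ltW (mpos i)) //=.
  by rewrite ler_pdivrMr ?mpos // mul1r /s /m ha.
have hE i : \sum_x D x * g i x <= m i * phi c (r i).
  rewrite (bigD1 (a i)) //=.
  have hle : \sum_(x | x != a i) D x * g i x <= \sum_(x | x != a i) D x * s i.
    apply: ler_sum => x hx; apply: ler_wpM2l => //; exact: (hb i).2.
  rewrite -big_distrl /= in hle.
  have eD : \sum_(x | x != a i) D x = 1 - D (a i).
    by apply/eqP; rewrite eq_sym subr_eq -D1 (bigD1 (a i)) //= addrC.
  rewrite eD in hle.
  have e : m i * phi c (r i) = (1 - c) * m i + c * s i.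
    have mi0 : m i != 0 by rewrite gt_eqF ?mpos.
    rewrite /phi /r; field; exact: mi0.
  rewrite e.
  have sm : s i <= m i by rewrite /s /m ha.
  have Da := Dc (a i). have Da0 := D0 (a i). have si0 : 0 <= s i by apply: g0.
  rewrite -/(m i).
  nra.
have [S [hS hcomb]] := comb _ _ _ _ _ _ r hK M0 p3 c0 c1 th0 th1 HR1 HR2 r01.
set Pm := \prod_(i < K) m i.
set Pr := \prod_(i in S) r i.
have Pm0 : 0 <= Pm by apply: prodr_ge0 => i _; apply: ltW; apply: mpos.
have Pr0 : 0 <= Pr by apply: prodr_ge0 => i _; case/andP: (r01 i).
have step1 : p%:R * \prod_(i < K) (\sum_x D x * g i x) <= Pm * ((#|S|.+1)%:R * Pr).
  apply: (@le_trans _ _ (p%:R * \prod_(i < K) (m i * phi c (r i)))).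
    apply: ler_wpM2l => //; apply: ler_prod => i _.
    rewrite sumr_ge0 /=; first exact: hE.
    by move=> x _; apply: mulr_ge0.
  rewrite big_split /= mulrCA; apply: ler_wpM2l => //.
pose d i := b i - a i.
have hd i : i \in S -> d i != 0 by move=> _; rewrite /d subr_eq0; exact: (hb i).1.
have hss := @ssums_card p K d pr S hS hd.
pose T := [set (\sum_(i < K) a i + w) | w in ssums d S].
have cT : #|T| = #|ssums d S| by rewrite card_imset //; apply: addrI.
have hT z : z \in T -> Pm * Pr <= h z.
  case/imsetP => w /imsetP [I IS ->] ->.
  pose y := [ffun i => if i \in I then b i else a i].
  have := hg y.
  have -> : \sum_(i < K) y i = \sum_(i < K) a i + \sum_(i in I) d i.
    rewrite [X in _ + X]big_mkcond -big_split /=; apply: eq_bigr => i _.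
    rewrite ffunE /d; case: (i \in I) => /=; first by rewrite addrC subrK.
    by rewrite addr0.
  apply: le_trans.
  have -> : \prod_(i < K) g i (y i) = Pm * \prod_(i in I) r i.
    rewrite [X in _ * X]big_mkcond -big_split /=; apply: eq_bigr => i _.
    rewrite ffunE; case: (i \in I) => /=; last by rewrite mulr1.
    by rewrite /r /m /s mulrC divfK // gt_eqF // mpos.
  apply: ler_wpM2l => //; apply: prod_sub => //.
  by move: IS; rewrite powersetE.
apply: le_trans step1 _.
rewrite mulrCA.
apply: (@le_trans _ _ (\sum_(z in T) h z)); last first.
  rewrite [X in _ <= X](bigID (mem T)) /= lerDl; apply: sumr_ge0 => z _; exact: h0.
apply: (@le_trans _ _ (\sum_(z in T) (Pm * Pr))); last by apply: ler_sum => z; apply: hT.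
rewrite sumr_const cT -[X in _ <= X]mulr_natl; apply: ler_wpM2r; first exact: mulr_ge0.
by rewrite ler_nat.
Qed.

Definition gsum {p n K : nat} (B : 'I_K -> {set 'rV['F_p]_n}) : {set 'rV['F_p]_n} :=
  [set x | [exists f : {ffun 'I_K -> 'rV['F_p]_n},
             [forall i, f i \in B i] && (\sum_(i < K) f i == x)]].

Lemma sumset_gsum (p n K : nat) (A : {set 'rV['F_p]_n}) :
  sumset K A = gsum (fun _ : 'I_K => A).
Proof. by []. Qed.

Definition fib {p n : nat} (B : {set 'rV['F_p]_(1 + n)}) (y : 'F_p) : {set 'rV['F_p]_n} :=
  [set v | row_mx (const_mx y) v \in B].

Lemma sum_split (R : realType) (p n : nat) (F : 'rV['F_p]_(1 + n) -> R) :
  \sum_x F x = \sum_(y : 'F_p) \sum_(v : 'rV['F_p]_n) F (row_mx (const_mx y) v).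
Proof.
rewrite pair_big /=.
rewrite (reindex (fun yv : 'F_p * 'rV['F_p]_n => row_mx (const_mx yv.1) yv.2)) /=.
  by apply: eq_bigr => -[y v].
exists (fun x : 'rV['F_p]_(1 + n) => (x 0 (lshift n (0 : 'I_1)), rsubmx x)).
  move=> [y v] _ /=; rewrite row_mxEl row_mxKr mxE //.
move=> x _ /=; rewrite -[RHS]hsubmxK; congr row_mx.
by apply/matrixP => i j; rewrite !ord1 !mxE.
Qed.

Lemma prod_dist_split (R : realType) (p n : nat) (D : 'F_p -> R) (y : 'F_p) (v : 'rV['F_p]_n) :
  prod_dist D (row_mx (const_mx y) v : 'rV['F_p]_(1 + n)) = D y * prod_dist D v.
Proof.
rewrite /prod_dist big_split_ord /= big_ord1 row_mxEl mxE.
by congr (_ * _); apply: eq_bigr => i _; rewrite row_mxEr.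
Qed.

Lemma density_split (R : realType) (p n : nat) (D : 'F_p -> R) (B : {set 'rV['F_p]_(1 + n)}) :
  density D B = \sum_(y : 'F_p) D y * density D (fib B y).
Proof.
rewrite /density big_mkcond sum_split; apply: eq_bigr => y _.
rewrite big_distrr /= [RHS]big_mkcond /=; apply: eq_bigr => v _.
rewrite inE prod_dist_split; by case: (_ \in B); rewrite ?mulr0.
Qed.

Lemma card_split (R : realType) (p n : nat) (B : {set 'rV['F_p]_(1 + n)}) :
  (#|B|%:R : R) = \sum_(y : 'F_p) (#|fib B y|%:R : R).
Proof.
rewrite -sum1_card natr_sum big_mkcond /= sum_split; apply: eq_bigr => y _.
rewrite -sum1_card natr_sum [RHS]big_mkcond /=; apply: eq_bigr => v _.
by rewrite inE; case: (_ \in B).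
Qed.

Lemma row_mx_sum (p n K : nat) (y : 'I_K -> 'F_p) (f : 'I_K -> 'rV['F_p]_n) :
  \sum_(i < K) (row_mx (const_mx (y i)) (f i) : 'rV['F_p]_(1 + n)) =
  row_mx (const_mx (\sum_(i < K) y i)) (\sum_(i < K) f i).
Proof.
have e1 : lsubmx (\sum_(i < K) (row_mx (const_mx (y i)) (f i) : 'rV['F_p]_(1 + n)))
    = const_mx (\sum_(i < K) y i).
  rewrite raddf_sum; apply/matrixP => a b; rewrite summxE [RHS]mxE.
  by apply: eq_bigr => i _; rewrite /= row_mxKl mxE.
have e2 : rsubmx (\sum_(i < K) (row_mx (const_mx (y i)) (f i) : 'rV['F_p]_(1 + n)))
    = \sum_(i < K) f i.
  by rewrite raddf_sum; apply: eq_bigr => k _; rewrite /= row_mxKr.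
by rewrite -e1 -e2 hsubmxK.
Qed.

Lemma gsum_fib (p n K : nat) (B : 'I_K -> {set 'rV['F_p]_(1 + n)}) (y : {ffun 'I_K -> 'F_p}) :
  gsum (fun i => fib (B i) (y i)) \subset fib (gsum B) (\sum_(i < K) y i).
Proof.
apply/fintype.subsetP => v; rewrite !inE => /existsP [f /andP [/forallP hf /eqP hs]].
apply/existsP; exists [ffun i => row_mx (const_mx (y i)) (f i) : 'rV['F_p]_(1 + n)].
apply/andP; split.
  by apply/forallP => i; rewrite ffunE; have := hf i; rewrite inE.
rewrite (eq_bigr (fun i => row_mx (const_mx (y i)) (f i))); last by move=> i _; rewrite ffunE.
by rewrite row_mx_sum hs.
Qed.

Lemma rV0_eq {p : nat} (x y : 'rV['F_p]_0) : x = y.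
Proof. by apply/matrixP => i []. Qed.

Lemma mainQ (R : realType) (c th : R) (p M K : nat) (D : 'F_p -> R) :
  prime p -> (2 < p)%N -> K = ((p - 1) * M)%N -> (0 < M)%N -> 0 <= c -> c <= 1 ->
  0 <= th -> th <= 1 ->
  (forall x, th <= x -> x <= 1 -> phi c x ^+ M <= x) ->
  (forall m, (m <= p - 1)%N -> p%:R * th ^+ m <= (p - m)%:R) ->
  (forall x, 0 <= D x) -> \sum_x D x = 1 -> (forall x, D x <= 1 - c) ->
  forall n (B : 'I_K -> {set 'rV['F_p]_n}),
  (p ^ n)%:R * \prod_(i < K) density D (B i) <= (#|gsum B|%:R : R).
Proof.
move=> pr p3 hK M0 c0 c1 th0 th1 HR1 HR2 D0 D1 Dc.
have dens0 n (B : {set 'rV['F_p]_n}) : 0 <= density D B.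
  apply: sumr_ge0 => x _; apply: prodr_ge0 => i _; exact: D0.
elim => [|n IH] B.
  rewrite expn0 mul1r.
  case: (boolP [exists i, B i == finset.set0]) => hB.
    case/existsP: hB => i /eqP hi.
    rewrite (bigD1 i) //= hi /density big_set0 mul0r; exact: ler0n.
  have nB i : exists x, x \in B i.
    apply/card_gt0P; rewrite card_gt0; apply/negP => /eqP e.
    by move/negP: hB; apply; apply/existsP; exists i; rewrite e.
  have d1 i : density D (B i) <= 1.
    rewrite /density (eq_bigr (fun=> 1)); last by move=> x _; rewrite /prod_dist big_ord0.
    rewrite sumr_const lern1.
    apply: leq_trans (max_card _) _; by rewrite card_mx mul1n expn0.
  have g0 : (0 : 'rV['F_p]_0) \in gsum B.
    rewrite inE; apply/existsP; exists [ffun=> 0]; apply/andP; split.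
      by apply/forallP => i; have [x xB] := nB i; rewrite ffunE (rV0_eq 0 x).
    by apply/eqP; apply: rV0_eq.
  apply: (@le_trans _ _ 1).
    by apply: prodr_ile1 => i _; rewrite dens0 d1.
  by rewrite ler1n; apply/card_gt0P; exists 0.
pose g := fun (i : 'I_K) (y : 'F_p) => density D (fib (B i) y).
pose h := fun y : 'F_p => (#|fib (gsum B) y|%:R : R) / (p ^ n)%:R.
have pn0 : (0 : R) < (p ^ n)%:R by rewrite ltr0n expn_gt0 prime_gt0.
have hg : forall y : {ffun 'I_K -> 'F_p}, \prod_(i < K) g i (y i) <= h (\sum_(i < K) y i).
  move=> y; rewrite /h ler_pdivlMr // mulrC.
  apply: le_trans (IH (fun i => fib (B i) (y i))) _.
  by rewrite ler_nat; apply: subset_leq_card; apply: gsum_fib.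
have := @oneD R c th p M K D g h pr p3 hK M0 c0 c1 th0 th1 HR1 HR2 D0 D1 Dc
  (fun i y => dens0 _ _) (fun y => divr_ge0 (ler0n _ _) (ltW pn0)) hg.
have -> : \prod_(i < K) (\sum_x D x * g i x) = \prod_(i < K) density D (B i).
  by apply: eq_bigr => i _; rewrite density_split.
have -> : \sum_z h z = (#|gsum B|%:R : R) / (p ^ n)%:R.
  by rewrite /h -mulr_suml -card_split.
rewrite ler_pdivlMr // => H.
apply: le_trans H; rewrite expnSr natrM le_eqVlt; apply/orP; left; apply/eqP; ring.
Qed.

Lemma bernoulli_ge (R : realType) (t : R) (n : nat) : 0 <= t -> 1 + n%:R * t <= (1 + t) ^+ n.
Proof.
move=> t0; elim: n => [|n IH]; first by rewrite mul0r addr0 expr0.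
rewrite exprS -natr1 mulrDl mul1r.
have h0 : 0 <= (1 + t) ^+ n by rewrite exprn_ge0 // addr_ge0.
have hn : 0 <= n%:R * t by rewrite mulr_ge0.
nra.
Qed.

Lemma HR1_lemma (R : realType) (c th : R) (M : nat) :
  0 <= c -> c <= 1 -> 0 < th -> 1 <= c * M%:R * th ->
  forall x, th <= x -> x <= 1 -> phi c x ^+ M <= x.
Proof.
move=> c0 c1 th0 lt x thx x1.
set u := 1 - x.
have u0 : 0 <= u by rewrite /u subr_ge0.
have u1 : u <= 1 by rewrite /u; have := le_trans (ltW th0) thx; lra.
have ea : phi c x = 1 - c * u by rewrite /phi /u; ring.
rewrite ea.
set a := 1 - c * u. set b := 1 + c * u.
have a0 : 0 <= a by rewrite /a; nra.
have b0 : 0 <= b by rewrite /b; nra.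
have ab : (a * b) ^+ M <= 1.
  apply: exprn_ile1; first by rewrite mulr_ge0.
  rewrite /a /b; nra.
have bM : 1 + M%:R * (c * u) <= b ^+ M by apply: bernoulli_ge; rewrite mulr_ge0.
set L := c * M%:R in lt *.
have L0 : 0 <= L by rewrite /L mulr_ge0.
have aM0 : 0 <= a ^+ M by rewrite exprn_ge0.
have h1 : a ^+ M * (1 + L * u) <= 1.
  have -> : 1 + L * u = 1 + M%:R * (c * u) by rewrite /L; ring.
  apply: le_trans ab; rewrite exprMn; exact: ler_wpM2l.
have Lx : 1 <= L * x.
  apply: le_trans lt _; apply: ler_wpM2l => //.
have h2 : 1 <= x * (1 + L * u).
  have -> : x * (1 + L * u) = 1 + u * (L * x - 1) by rewrite /u; ring.
  rewrite lerDl; apply: mulr_ge0 => //; rewrite subr_ge0 //.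
have pos : 0 < 1 + L * u by have := mulr_ge0 L0 u0; lra.
rewrite -(ler_pM2r pos); exact: le_trans h1 h2.
Qed.

Lemma HR2_lemma (R : realType) (p : nat) : (2 < p)%N ->
  forall m, (m <= p - 1)%N ->
  p%:R * (128 / (25 * (p%:R : R) ^+ 2)) ^+ m <= (p - m)%:R.
Proof.
move=> p3 m hm.
have P3 : (3 : R) <= p%:R by rewrite ler_nat.
set P := (p%:R : R) in P3 *.
set th := 128 / (25 * P ^+ 2).
have P2 : 0 < 25 * P ^+ 2 by rewrite mulr_gt0 // exprn_gt0 //; lra.
have th0 : 0 <= th by rewrite /th divr_ge0 //; lra.
have th1 : th <= 1 by rewrite /th ler_pdivrMr // mul1r expr2; nra.
rewrite natrB; last by lia.
case: m hm => [|[|m]] hm.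
- by rewrite expr0 mulr1 subr0.
- rewrite expr1 /th.
  rewrite mulrA ler_pdivrMr // expr2; nra.
- have e : th ^+ m.+2 <= th ^+ 2.
    rewrite !exprS expr0 mulr1; apply: ler_wpM2l => //; rewrite -[X in _ <= X]mulr1; apply: ler_wpM2l => //.
    by apply: exprn_ile1.
  have hm2 : (m.+2%:R : R) <= P - 1.
    have : (m.+2 <= p - 1)%N by []. rewrite -(ler_nat R) natrB; last by lia.
    by rewrite -/P.
  apply: (@le_trans _ _ (P * th ^+ 2)); first by apply: ler_wpM2l => //; lra.
  have : P * th ^+ 2 <= 1.
    rewrite /th expr2 mulf_div.
    rewrite mulrA ler_pdivrMr; last by rewrite mulr_gt0.
    rewrite mul1r !expr2. have h9 : 9 <= P * P by nra. have h27 : 27 <= P * (P * P) by nra. nra.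
  lra.
Qed.

Theorem proposition3p4 (R : realType) (p : nat) (c : R) (M n : nat)
  (D : 'F_p -> R) (A : {set 'rV['F_p]_n}) (eps : R) :
  prime p -> (3 <= p)%N -> 0 < c ->
  (M%:Z = Num.ceil (2 * (p%:R) ^+ 2 * ln (p%:R) / (c * pi ^+ 2))) ->
  (forall x, 0 <= D x) -> \sum_(x : 'F_p) D x = 1 ->
  (forall x, D x <= 1 - c) ->
  density D A = eps ->
  eps ^+ ((p - 1) * M) <= unif_density R (sumset ((p - 1) * M) A).
Proof.
move=> pr p3 c0 hM D0 D1 Dc hA.
have lam := lam_bound _ _ _ _ p3 c0 hM.
have c1 : c <= 1 by have := D0 0; have := Dc 0; lra.
have P3 : (3 : R) <= p%:R by rewrite ler_nat.
set th : R := 128 / (25 * (p%:R : R) ^+ 2).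
have P2 : 0 < 25 * (p%:R : R) ^+ 2 by rewrite mulr_gt0 // exprn_gt0 //; lra.
have th0 : 0 < th by rewrite /th divr_gt0 //.
have th1 : th <= 1 by rewrite /th ler_pdivrMr // mul1r expr2; nra.
have lt : 1 <= c * M%:R * th.
  rewrite /th mulrA ler_pdivlMr // mul1r.
  move: lam; rewrite ler_pdivrMr //; lra.
have M0 : (0 < M)%N.
  rewrite lt0n; apply/negP => /eqP M0; move: lt; rewrite M0 mulr0 mul0r; lra.
have HR1 := HR1_lemma _ _ _ _ (ltW c0) c1 th0 lt.
have HR2 := HR2_lemma R p p3.
have := mainQ _ _ _ _ _ _ _ pr p3 (erefl _) M0 (ltW c0) c1 (ltW th0) th1 HR1 HR2 D0 D1 Dc
  n (fun _ : 'I_((p - 1) * M) => A).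
rewrite (eq_bigr (fun=> eps)); last by move=> i _; rewrite hA.
rewrite prodr_const card_ord -sumset_gsum => H.
rewrite /unif_density ler_pdivlMr; last by rewrite ltr0n expn_gt0 prime_gt0.
by rewrite mulrC.
Qed.
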